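(* A large scale group $G$ has asymptotic dimension $0$ if and only if for every bounded subset $B$ of $G$ the subgroup $\langle B\rangle$ generated by $B$ is bounded.
   Context: A bornology on a set $X$ is a cover of $X$ closed under taking subsets and finite unions. A large scale group is a group $G$ with a bornology $\mathcal B$ that is closed under inverses ($B\in\mathcal B\Rightarrow B^{-1}\in\mathcal B$) and products ($B_1,B_2\in\mathcal B\Rightarrow B_1B_2\in\mathcal B$); its uniformly bounded covers are the covers of $G$ refining $\{gB\}_{g\in G}$ for some $B\in\mathcal B$, and its bounded sets are the members of $\mathcal B$. A large scale space has asymptotic dimension $0$ if every uniformly bounded cover refines a uniformly bounded cover consisting of mutually disjoint sets. *)

(* Defs.v *)
(* an abstract (possibly infinite) group given by its operations
   and axioms; subsets are predicates G -> Prop, families of subsets are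
   predicates on predicates. *)

Record is_group {G : Type} (mul : G -> G -> G) (inv : G -> G) (e : G) : Prop := {
  grp_assoc : forall x y z, mul x (mul y z) = mul (mul x y) z;
  grp_id_l  : forall x, mul e x = x;
  grp_inv_l : forall x, mul (inv x) x = e
}.

Definition subset {G : Type} (A C : G -> Prop) : Prop := forall x, A x -> C x.
Definition setU {G : Type} (A C : G -> Prop) : G -> Prop := fun x => A x \/ C x.

Definition bornology {G : Type} (Bo : (G -> Prop) -> Prop) : Prop :=
  (forall x : G, exists A, Bo A /\ A x) /\
  (forall A C, Bo A -> subset C A -> Bo C) /\
  (forall A C, Bo A -> Bo C -> Bo (setU A C)).

Definition set_inv {G : Type} (inv : G -> G) (A : G -> Prop) : G -> Prop :=
  fun x => exists a, A a /\ x = inv a.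
Definition set_mul {G : Type} (mul : G -> G -> G) (A C : G -> Prop) : G -> Prop :=
  fun x => exists a c, A a /\ C c /\ x = mul a c.
Definition lcoset {G : Type} (mul : G -> G -> G) (g : G) (A : G -> Prop) : G -> Prop :=
  fun x => exists a, A a /\ x = mul g a.

Definition large_scale_group {G : Type} (mul : G -> G -> G) (inv : G -> G) (e : G)
  (Bo : (G -> Prop) -> Prop) : Prop :=
  is_group mul inv e /\ bornology Bo /\
  (forall A, Bo A -> Bo (set_inv inv A)) /\
  (forall A C, Bo A -> Bo C -> Bo (set_mul mul A C)).

Definition is_cover {G : Type} (U : (G -> Prop) -> Prop) : Prop :=
  forall x : G, exists V, U V /\ V x.

Definition refines {G : Type} (U W : (G -> Prop) -> Prop) : Prop :=
  forall V, U V -> exists V', W V' /\ subset V V'.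

Definition unif_bounded_cover {G : Type} (mul : G -> G -> G) (Bo : (G -> Prop) -> Prop)
  (U : (G -> Prop) -> Prop) : Prop :=
  is_cover U /\
  exists B, Bo B /\ refines U (fun V => exists g, V = lcoset mul g B).

Definition mutually_disjoint {G : Type} (U : (G -> Prop) -> Prop) : Prop :=
  forall V W, U V -> U W -> (exists x, V x /\ W x) -> forall y, V y <-> W y.

Definition asdim0 {G : Type} (mul : G -> G -> G) (Bo : (G -> Prop) -> Prop) : Prop :=
  forall U, unif_bounded_cover mul Bo U ->
    exists W, unif_bounded_cover mul Bo W /\ mutually_disjoint W /\ refines U W.

Definition is_subgroup {G : Type} (mul : G -> G -> G) (inv : G -> G) (e : G)
  (H : G -> Prop) : Prop :=
  H e /\ (forall x y, H x -> H y -> H (mul x y)) /\ (forall x, H x -> H (inv x)).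

Definition gen_subgroup {G : Type} (mul : G -> G -> G) (inv : G -> G) (e : G)
  (B : G -> Prop) : G -> Prop :=
  fun x => forall H, is_subgroup mul inv e H -> subset B H -> H x.

(* Main.v *)
Require Import Defs.
From Stdlib Require Import Setoid.

Section Grp.
Variables (G : Type) (mul : G -> G -> G) (inv : G -> G) (e : G).
Hypothesis hg : is_group mul inv e.

Lemma idem_e z : mul z z = z -> z = e.
Proof.
  intro Hz. destruct hg as [A L I].
  transitivity (mul (mul (inv z) z) z). rewrite I; symmetry; apply L.
  rewrite <- A, Hz. apply I.
Qed.

Lemma inv_r x : mul x (inv x) = e.
Proof.
  apply idem_e. destruct hg as [A L I].
  rewrite <- A. rewrite (A (inv x) x (inv x)). rewrite I, L. reflexivity.
Qed.

Lemma id_r x : mul x e = x.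
Proof.
  destruct hg as [A L I]. rewrite <- (I x). rewrite A, inv_r. apply L.
Qed.

Lemma gen_is_sub B : is_subgroup mul inv e (gen_subgroup mul inv e B).
Proof.
  split; [|split].
  - intros K [H1 _] _; auto.
  - intros x y Hx Hy K HK HB. destruct HK as [H1 [H2 H3]] eqn:E.
    apply H2; [apply Hx|apply Hy]; auto.
  - intros x Hx K HK HB. destruct HK as [H1 [H2 H3]] eqn:E.
    apply H3; apply Hx; auto.
Qed.

Lemma coset_shift (H : G -> Prop) g g' a c h :
  is_subgroup mul inv e H -> H a -> H c -> H h -> mul g a = mul g' c ->
  exists h', H h' /\ mul g h = mul g' h'.
Proof.
  intros [H1 [H2 H3]] Ha Hc Hh Heq.
  exists (mul c (mul (inv a) h)). split. auto.
  destruct hg as [A L I].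
  assert (Hg : g = mul (mul g' c) (inv a)).
  { rewrite <- Heq, <- A, inv_r, id_r. reflexivity. }
  rewrite Hg, <- !A. reflexivity.
Qed.
End Grp.

Theorem theorem4p6 (G : Type) (mul : G -> G -> G) (inv : G -> G) (e : G)
  (Bo : (G -> Prop) -> Prop) :
  large_scale_group mul inv e Bo ->
  (asdim0 mul Bo <-> forall B, Bo B -> Bo (gen_subgroup mul inv e B)).
Proof.
  intros [hg [[Bcov [Bsub BU]] [Binv Bmul]]].
  assert (Hsing : forall g : G, Bo (fun x => x = g)).
  { intro g. destruct (Bcov g) as [A [HA Ag]]. apply (Bsub A); auto.
    intros x ->; auto. }
  pose proof (id_r G mul inv e hg) as idr. pose proof (inv_r G mul inv e hg) as invr.
  destruct hg as [A L I] eqn:Ehg.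
  split.
  - intros Had B HB.
    set (B' := setU (setU B (set_inv inv B)) (fun x => x = e)).
    assert (HB' : Bo B') by (apply BU; [apply BU; auto|auto]).
    set (U := fun V => exists g, V = lcoset mul g B').
    assert (HU : unif_bounded_cover mul Bo U).
    { split.
      - intro x. exists (lcoset mul x B'). split. exists x; reflexivity.
        exists e. split. right; reflexivity. symmetry; apply idr.
      - exists B'. split; auto. intros V HV. exists V. split; auto.
        intros y Hy; exact Hy. }
    destruct (Had U HU) as [W [[Wcov [D [HD WD]]] [Wdis WU]]].
    destruct (Wcov e) as [W0 [HW0 W0e]].
    assert (Hstep : forall y c, W0 y -> B' c -> W0 (mul y c)).
    { intros y c Hy Hc.
      destruct (WU (lcoset mul y B')) as [W1 [HW1 S1]]. exists y; reflexivity.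
      assert (W1 y).
      { apply S1. exists e. split. right; reflexivity. symmetry; apply idr. }
      apply (Wdis W1 W0 HW1 HW0 (ex_intro _ y (conj H Hy))).
      apply S1. exists c; auto. }
    set (S := fun x => forall y, W0 y <-> W0 (mul y x)).
    assert (HS : is_subgroup mul inv e S).
    { split; [|split].
      - intro y. rewrite idr. tauto.
      - intros x z Hx Hz y. rewrite (Hx y), (Hz (mul y x)), A. tauto.
      - intros x Hx y. rewrite (Hx (mul y (inv x))).
        rewrite <- A, I, idr. tauto. }
    assert (HBS : subset B S).
    { intros b Hb y. split; intro Hy.
      - apply Hstep; auto. left; left; auto.
      - replace y with (mul (mul y b) (inv b)).
        apply Hstep; auto. left; right. exists b; auto.
        rewrite <- A, invr, idr; reflexivity. }
    destruct (WD W0 HW0) as [V' [[g ->] HsV]].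
    apply (Bsub (set_mul mul (fun x => x = g) D)).
    + apply Bmul; auto.
    + intros x Hx. assert (W0 x).
      { rewrite <- (L x). apply (proj1 (Hx S HS HBS e)). exact W0e. }
      destruct (HsV x H) as [d [Hd ->]]. exists g, d. auto.
  - intros Hgen U [Ucov [B [HB UB]]].
    set (H := gen_subgroup mul inv e B).
    pose proof (gen_is_sub G mul inv e B) as HH. fold H in HH.
    exists (fun V => exists g, V = lcoset mul g H).
    split; [split|split].
    + intro x. exists (lcoset mul x H). split. exists x; reflexivity.
      exists e. split. apply HH. symmetry; apply idr.
    + exists H. split. apply Hgen; auto.
      intros V HV. exists V. split; auto. intros y Hy; exact Hy.
    + intros V W [g ->] [g' ->] [x [[a [Ha Hxa]] [c [Hc Hxc]]]] y.
      rewrite Hxa in Hxc.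
      split.
      * intros [h [Hh ->]]. destruct (coset_shift G mul inv e hg H g g' a c h HH Ha Hc Hh Hxc)
          as [h' [Hh' E]]. exists h'; auto.
      * intros [h [Hh ->]]. destruct (coset_shift G mul inv e hg H g' g c a h HH Hc Ha Hh (eq_sym Hxc))
          as [h' [Hh' E]]. exists h'; auto.
    + intros V HV. destruct (UB V HV) as [V' [[g ->] HsV]].
      exists (lcoset mul g H). split. exists g; reflexivity.
      intros x Hx. destruct (HsV x Hx) as [b [Hb ->]]. exists b. split; auto.
      intros K HK HBK. auto.
Qed.
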